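(* $U(1,\infty)=\{2314,\,3124,\,3142\}$, and for every integer $t\ge 2$, $$U(1,t)=\{2314,\,3124,\,3142,\,(t+1)\,t\,(t-1)\cdots 2\,1\,(t+2)\},$$ where the last permutation has length $t+2$ and lists $t+1,t,\dots,1$ in decreasing order followed by $t+2$.
   Context: Forkstack sorting with capacities $s,t\in\{1,2,3,\dots\}\cup\{\infty\}$: a permutation $\pi=\pi_1\cdots\pi_n$ of $\{1,\dots,n\}$ is placed on an input stack with $\pi_1$ on top; a working stack and an output stack are initially empty. A move either (i) removes the top $k$ elements of the input stack ($1\le k\le s$) and places them as a block, relative order unchanged, on top of the working stack, or (ii) removes the top $l$ elements of the working stack ($1\le l\le t$) and places them as a block, relative order unchanged, on top of the output stack. $\pi$ is sortable if some sequence of moves ends with input and working stacks empty and the output stack reading $1,2,\dots,n$ from top to bottom. $\mathcal F(s,t)$ is the set of sortable permutations. A permutation $\sigma$ is involved in $\pi$ if some subsequence of $\pi$ of length $|\sigma|$ has entries in the same relative order as $\sigma$. $U(s,t)$ is the set of involvement-minimal permutations not in $\mathcal F(s,t)$. Permutations are written in one-line notation. *)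

(* Defs.v *)
From mathcomp Require Import all_boot.
Set Implicit Arguments. Unset Strict Implicit. Unset Printing Implicit Defensive.

Inductive cap := Fin of nat | Inf.

Definition cap_ok (c : cap) : bool :=
  match c with Fin n => 0 < n | Inf => true end.

Definition allowed (c : cap) (k : nat) : bool :=
  (0 < k) && match c with Fin n => k <= n | Inf => true end.

Definition is_perm (p : seq nat) : bool := perm_eq p (iota 1 (size p)).

(* States: (input, working, output); the head of each list is the top. *)
Definition state := (seq nat * seq nat * seq nat)%type.

Inductive move (s t : cap) : state -> state -> Prop :=
| move_in (i w o : seq nat) (k : nat) :
    allowed s k -> k <= size i ->
    move s t (i, w, o) (drop k i, take k i ++ w, o)
| move_out (i w o : seq nat) (l : nat) :
    allowed t l -> l <= size w ->
    move s t (i, w, o) (i, drop l w, take l w ++ o).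

Inductive reach (s t : cap) : state -> state -> Prop :=
| reach_refl x : reach s t x x
| reach_step x y z : move s t x y -> reach s t y z -> reach s t x z.

Definition sortable (s t : cap) (p : seq nat) : Prop :=
  reach s t (p, [::], [::]) ([::], [::], iota 1 (size p)).

Definition involved (sigma p : seq nat) : Prop :=
  exists q : seq nat, [/\ subseq q p, size q = size sigma &
    forall i j, i < size sigma -> j < size sigma ->
      (nth 0 q i < nth 0 q j) = (nth 0 sigma i < nth 0 sigma j)].

Definition inU (s t : cap) (p : seq nat) : Prop :=
  [/\ is_perm p, ~ sortable s t p &
      forall sigma, is_perm sigma -> involved sigma p -> sigma <> p ->
        sortable s t sigma].

(* Main.v *)
Require Import Defs.
From mathcomp Require Import all_boot zify.
Set Implicit Arguments. Unset Strict Implicit. Unset Printing Implicit Defensive.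

Inductive bstack (c : cap) : seq nat -> Prop :=
| bs_nil : bstack c [::]
| bs_cons a k w : allowed c k -> (forall x, x \in w -> x < a) -> bstack c w ->
    bstack c (iota a k ++ w).

Definition Dpat (t : nat) := rcons (rev (iota 1 t.+1)) t.+2.

Definition avoidP (c : cap) (v : seq nat) : Prop :=
  [/\ ~ involved [:: 2;3;1;4] v, ~ involved [::3;1;2;4] v, ~ involved [::3;1;4;2] v &
   forall t, c = Fin t -> ~ involved (Dpat t) v].

Lemma involved_subseq s v v' : subseq v' v -> involved s v' -> involved s v.
Proof.
move=> Hs [q [Hq Hsz Hn]]; exists q; split => //; exact: subseq_trans Hs.
Qed.

Lemma avoidP_sub c v v' : subseq v' v -> avoidP c v -> avoidP c v'.
Proof.
move=> Hs [H1 H2 H3 H4]; split.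
- by move/(involved_subseq Hs).
- by move/(involved_subseq Hs).
- by move/(involved_subseq Hs).
- by move=> t Ht /(involved_subseq Hs); apply: H4.
Qed.

Lemma inv4 s x1 x2 x3 x4 p : subseq [:: x1;x2;x3;x4] p -> size s = 4 ->
  (forall i j, i < 4 -> j < 4 ->
    (nth 0 [::x1;x2;x3;x4] i < nth 0 [::x1;x2;x3;x4] j) = (nth 0 s i < nth 0 s j)) ->
  involved s p.
Proof. by move=> H1 H2 H3; exists [:: x1;x2;x3;x4]; split => //; rewrite H2. Qed.

Lemma beq (b1 b2 : bool) : (b1 -> b2) -> (b2 -> b1) -> b1 = b2.
Proof. by case: b1; case: b2 => // H1 H2; [move: (H1 isT) | move: (H2 isT)]. Qed.

Ltac cmpt := apply: beq => ?; first [by [] | lia].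

Lemma sub2 (x y : nat) s : x \in s -> y \in s -> x != y ->
  subseq [:: x; y] s \/ subseq [:: y; x] s.
Proof.
move=> Hx Hy Hxy; case/splitPr: Hx Hy => s1 s2.
rewrite mem_cat inE eq_sym (negbTE Hxy) /= => /orP [Hy|Hy].
- right; rewrite -[[:: y; x]]/([:: y] ++ [:: x]).
  apply: cat_subseq; first by rewrite sub1seq.
  by rewrite /= eqxx sub0seq.
- left; rewrite -[s1 ++ x :: s2]/(s1 ++ [:: x] ++ s2) -[[:: x; y]]/([::] ++ [:: x] ++ [:: y]).
  apply: cat_subseq; first exact: sub0seq.
  by apply: cat_subseq => //; rewrite sub1seq.
Qed.


Lemma cmp16 (x : nat -> nat) (y : nat -> nat) :
  (forall i j, i < 4 -> j < 4 -> (x i < x j) = (y i < y j)) -> True.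
Proof. by []. Qed.

Lemma inv2314 x1 x2 x3 x4 p : x3 < x1 -> x1 < x2 -> x2 < x4 ->
  subseq [:: x1;x2;x3;x4] p -> involved [::2;3;1;4] p.
Proof.
move=> h1 h2 h3 Hs; apply: inv4 Hs _ _ => //.
move=> [|[|[|[|i]]]] [|[|[|[|j]]]] //= _ _; apply: beq => ?; first [by [] | lia].
Qed.

Lemma inv3124 x1 x2 x3 x4 p : x2 < x3 -> x3 < x1 -> x1 < x4 ->
  subseq [:: x1;x2;x3;x4] p -> involved [::3;1;2;4] p.
Proof.
move=> h1 h2 h3 Hs; apply: inv4 Hs _ _ => //.
move=> [|[|[|[|i]]]] [|[|[|[|j]]]] //= _ _; apply: beq => ?; first [by [] | lia].
Qed.

Lemma inv3142 x1 x2 x3 x4 p : x2 < x4 -> x4 < x1 -> x1 < x3 ->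
  subseq [:: x1;x2;x3;x4] p -> involved [::3;1;4;2] p.
Proof.
move=> h1 h2 h3 Hs; apply: inv4 Hs _ _ => //.
move=> [|[|[|[|i]]]] [|[|[|[|j]]]] //= _ _; apply: beq => ?; first [by [] | lia].
Qed.

Lemma nthD c n M i : i < n.+1 ->
  nth 0 (rcons (rev (iota c n)) M) i = if i < n then c + (n - i.+1) else M.
Proof.
move=> Hi; rewrite nth_rcons size_rev size_iota.
case: ltnP => H.
- by rewrite nth_rev ?size_iota // nth_iota ?size_iota //; lia.
- have -> : i == n by apply/eqP; lia.
  by [].
Qed.

Lemma invD t c M p : c + t < M -> subseq (rcons (rev (iota c t.+1)) M) p -> involved (Dpat t) p.
Proof.
move=> HM Hs; exists (rcons (rev (iota c t.+1)) M); split => //.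
  by rewrite /Dpat !size_rcons !size_rev !size_iota.
rewrite /Dpat size_rcons size_rev size_iota => i j Hi Hj.
rewrite !nthD //.
case: (ltnP i t.+1) => Hi'; case: (ltnP j t.+1) => Hj' /=; apply: beq => ?; first [by [] | lia].
Qed.

Lemma allowed1 c : cap_ok c -> allowed c 1.
Proof. by case: c => //= t. Qed.

Ltac nlia := repeat match goal with
  | H : is_true (_ \in _) |- _ => clear H
  | H : is_true (perm_eq _ _) |- _ => clear H
  | H : is_true (uniq _) |- _ => clear H
  | H : is_true (_ \notin _) |- _ => clear H
  | H : (_ \in _) = _ |- _ => clear H
  | H : is_true (subseq _ _) |- _ => clear H
  | H : forall _, _ |- _ => clear H
  | H : avoidP _ _ |- _ => clear H
  | H : ~ involved _ _ |- _ => clear H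
  | H : bstack _ _ |- _ => clear H
  | H : is_true (allowed _ _) |- _ => clear H
  | H : is_true (cap_ok _) |- _ => clear H
  end; lia.

Lemma alg_state c N : cap_ok c -> forall n i w, 2 * size i + size w <= n ->
  perm_eq (i ++ w) (iota 1 (size i + size w)) -> size i + size w <= N ->
  bstack c w -> avoidP c (rev w ++ i) ->
  reach (Fin 1) c (i, w, iota (size i + size w).+1 (N - (size i + size w)))
        ([::],[::], iota 1 N).
Proof.
move=> Hc; elim=> [|n IH] i w Hn Hp HN Hb Ha.
  have [Ei Ew] : i = [::] /\ w = [::].
    have [/size0nil Ei /size0nil Ew] : size i = 0 /\ size w = 0 by nlia.
    by [].
  by subst i w; rewrite /= subn0; apply: reach_refl.
have Hu : uniq (i ++ w) by rewrite (perm_uniq Hp) iota_uniq.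
have Hr : forall x, x \in i ++ w -> 0 < x <= size i + size w.
  by move=> x; rewrite (perm_mem Hp) mem_iota; nlia.
case E0: (size i + size w == 0).
  have [Ei Ew] : i = [::] /\ w = [::].
    have [/size0nil Ei /size0nil Ew] : size i = 0 /\ size w = 0 by move/eqP: E0; nlia.
    by [].
  by subst i w; rewrite /= subn0; apply: reach_refl.
have Hm : size i + size w \in i ++ w.
  by rewrite (perm_mem Hp) mem_iota; move/negbT: E0; nlia.
case Hmw: (size i + size w \in w).
- destruct Hb as [|a k w' Hk Hlt Hb']; first by [].
  move: Hmw Hr Hm Hp Hu HN Hn Ha; rewrite size_cat size_iota.
  move=> Hmw Hr Hm Hp Hu HN Hn Ha.
  have k0 : 0 < k by case/andP: Hk.
  have Ha1 : a \in i ++ iota a k ++ w' by rewrite !mem_cat mem_iota; nlia.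
  have Ha2 := Hr _ Ha1.
  have Hmk : size i + (k + size w') \in iota a k.
    move: Hmw; rewrite mem_cat => /orP [//|/Hlt]; nlia.
  have Hak : a + k - 1 \in i ++ iota a k ++ w' by rewrite !mem_cat mem_iota; nlia.
  have Hak2 := Hr _ Hak.
  move: Hmk; rewrite mem_iota => Hmk.
  have EM : size i + (k + size w') = a + k - 1 by nlia.
  apply: (reach_step (move_out _ _ _ Hk _)).
    by rewrite size_cat size_iota leq_addr.
  rewrite take_size_cat ?size_iota // drop_size_cat ?size_iota //.
  have -> : iota a k ++ iota (size i + (k + size w')).+1 (N - (size i + (k + size w')))
     = iota (size i + size w').+1 (N - (size i + size w')).
    have -> : N - (size i + size w') = k + (N - (size i + (k + size w'))) by nlia.
    rewrite iotaD; congr (_ ++ _); congr iota; nlia.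
  apply: IH => //.
  + nlia.
  + have Hi : iota 1 (size i + (k + size w')) = iota 1 (size i + size w') ++ iota a k.
      rewrite (_ : size i + (k + size w') = (size i + size w') + k); last by nlia.
      by rewrite iotaD; congr (_ ++ _); congr iota; nlia.
    rewrite Hi in Hp.
    rewrite -(perm_cat2r (iota a k)); apply: perm_trans Hp.
    by rewrite -catA perm_cat2l perm_catC.
  + nlia.
  + apply: avoidP_sub Ha; rewrite rev_cat -catA.
    apply: cat_subseq => //.
    by rewrite -[i]cat0s; apply: cat_subseq => //; apply: sub0seq.
- clear E0; case: i Hn Hp HN Ha Hu Hr Hm Hmw => [|g i'] Hn Hp HN Ha Hu Hr Hm Hmw.
    by rewrite /= Hmw in Hm.
  have Hsz : size (g :: i') + size w = size i' + size (g :: w) by rewrite /= addSn addnS.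
  rewrite Hsz in Hp Hr Hm Hmw HN *.
  apply: (reach_step (@move_in (Fin 1) c (g :: i') w _ 1 erefl erefl)) => /=.
  rewrite take0 drop0 cat0s.
  apply: IH.
  + by move: Hn; rewrite /=; nlia.
  + by apply: perm_trans Hp; rewrite -[g :: w]cat1s perm_catCA.
  + by [].
  +
    have Hgw : g \notin w by move: Hu; rewrite /= mem_cat negb_or => /andP [/andP [_ ->]].
    have Hg1 : 0 < g by have := Hr g; rewrite mem_cat inE eqxx => /(_ isT); nlia.
    destruct Hb as [|a k w' Hk Hlt Hb'].
    * rewrite -[[:: g]]/(iota g 1 ++ [::]); apply: bs_cons; [exact: allowed1 Hc|by []|exact: bs_nil].
    * have k0 : 0 < k by case/andP: Hk.
      case: (leqP (a + k) g) => Hg.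
      - rewrite -[g :: _]/(iota g 1 ++ _); apply: bs_cons; [exact: allowed1 Hc| |exact: bs_cons].
        by move=> x; rewrite mem_cat mem_iota => /orP [|/Hlt]; nlia.
      have Hga : g < a.
        by move: Hgw; rewrite mem_cat mem_iota negb_or => /andP [H _]; nlia.
      have HaM : a <= size i' + size (g :: iota a k ++ w').
        have := Hr a; rewrite !mem_cat mem_iota; have -> : a <= a < a + k by nlia.
        by rewrite /= orbT => /(_ isT); nlia.
      have HakM : a + k - 1 < size i' + size (g :: iota a k ++ w').
        have := Hr (a + k - 1); rewrite !mem_cat mem_iota.
        have -> : a <= a + k - 1 < a + k by nlia.
        rewrite orbT => /(_ isT) H.
        suff : a + k - 1 != size i' + size (g :: iota a k ++ w') by nlia.
        apply/negP => /eqP E; move: Hmw; rewrite -E mem_cat mem_iota.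
        by have -> : a <= a + k - 1 < a + k by nlia.
      have HMi : size i' + size (g :: iota a k ++ w') \in i'.
        move: Hm; rewrite inE mem_cat Hmw orbF => /orP [/eqP Eg|//]; nlia.
      move: (size i' + size (g :: iota a k ++ w')) HaM HakM HMi Hp => M HaM HakM HMi Hp.
      case: Ha => H1 H2 H3 H4.
      rewrite rev_cat -catA in H1 H2 H3 H4.
      case: (eqVneq g.+1 a) => Eg.
      + have -> : g :: iota a k ++ w' = iota g k.+1 ++ w' by rewrite -Eg.
        apply: bs_cons; last by [].
        * destruct c as [t|]; last by []. move: Hk => /= /andP [_ Hkt].
          case: (ltnP k t) => // Hkt'.
          have Ekt : k = t by nlia.
          exfalso; apply: (H4 t erefl).
          apply: (@invD t g M); first by nlia.
          have -> : rcons (rev (iota g t.+1)) M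
             = [::] ++ (rev (iota a k) ++ [:: g; M]).
            by rewrite /= rev_cons -Eg Ekt -!cats1 -catA.
          apply: cat_subseq; first exact: sub0seq.
          apply: cat_subseq => //.
          by rewrite /= eqxx sub1seq.
        * move=> x Hx; have := Hlt _ Hx.
          have : x != g by apply/negP => /eqP E; move: Hgw; rewrite -E mem_cat Hx orbT.
          nlia.
      + exfalso; move/eqP: Eg => Eg.
        have Hb1 : a.-1 \in (g :: i') ++ iota a k ++ w'.
          by rewrite (perm_mem Hp) mem_iota; nlia.
        move: Hb1; rewrite mem_cat inE mem_cat mem_iota.
        case/orP => [/orP [/eqP E|Hbi] | /orP [Hbk | Hbw]]; first nlia; last first.
        - apply: H1; apply: (@inv2314 a.-1 a g M); [nlia|nlia|nlia|].
          + rewrite -[[:: _; _; _; _]]/([:: a.-1] ++ ([:: a] ++ [:: g; M])).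
            apply: cat_subseq; first by rewrite sub1seq mem_rev.
            apply: cat_subseq; first by rewrite sub1seq mem_rev mem_iota; nlia.
            by rewrite /= eqxx sub1seq.
        - nlia.
        - have Hne : a.-1 != M by apply/negP => /eqP; nlia.
          have [Hs|Hs] := sub2 Hbi HMi Hne.
          + apply: H2; apply: (@inv3124 a g a.-1 M); [nlia|nlia|nlia|].
            * rewrite -[[:: _; _; _; _]]/([::] ++ ([:: a] ++ (g :: [:: a.-1; M]))).
              apply: cat_subseq; first exact: sub0seq.
              apply: cat_subseq; first by rewrite sub1seq mem_rev mem_iota; nlia.
              by rewrite /= eqxx.
          + apply: H3; apply: (@inv3142 a g M a.-1); [nlia|nlia|nlia|].
            * rewrite -[[:: _; _; _; _]]/([::] ++ ([:: a] ++ (g :: [:: M; a.-1]))).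
              apply: cat_subseq; first exact: sub0seq.
              apply: cat_subseq; first by rewrite sub1seq mem_rev mem_iota; nlia.
              by rewrite /= eqxx.
  + by rewrite rev_cons cat_rcons.
Qed.

Definition mu (x : state) := let: (i, w, o) := x in 2 * size i + size w.
Definition succs (x : state) : seq state := let: (i,w,o) := x in
  (if i is _ :: _ then [:: (drop 1 i, take 1 i ++ w, o)] else [::]) ++
  [seq (i, drop l w, take l w ++ o) | l <- iota 1 (size w)].
Fixpoint reachb n (x y : state) : bool := (x == y) ||
  (if n is n'.+1 then has (fun z => reachb n' z y) (succs x) else false).

Lemma move_succ x y : move (Fin 1) Inf x y -> y \in succs x /\ mu y < mu x.
Proof.
case=> [i w o k Hk Hki | i w o l Hl Hlw].
- move: Hk => /andP [H0 H1]; have Ek : k = 1 by lia.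
  subst k; case: i Hki => // g i' _; rewrite /= drop0 take0 cat0s inE eqxx; split => //; lia.
- split; last by rewrite /mu size_drop; move: Hl; rewrite /allowed andbT => Hl; lia.
  rewrite /= mem_cat; apply/orP; right; apply/mapP; exists l => //.
  by rewrite mem_iota; move: Hl; rewrite /allowed andbT => Hl; lia.
Qed.

Lemma reach_b x y : reach (Fin 1) Inf x y -> forall n, mu x <= n -> reachb n x y.
Proof.
elim=> [z|a b c Hm _ IH] n Hn; first by case: n Hn => [|n] _ /=; rewrite eqxx.
have [Hb Hmu] := move_succ Hm.
case: n Hn => [|n] Hn; first lia.
rewrite /=; apply/orP; right; apply/hasP; exists b => //; apply: IH; lia.
Qed.

Lemma nonsort p : reachb (2 * size p) (p,[::],[::]) ([::],[::], iota 1 (size p)) = false ->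
  ~ sortable (Fin 1) Inf p.
Proof.
move=> H Hs; have := reach_b Hs (n := 2 * size p); rewrite H /= addn0 => /(_ (leqnn _)).
by [].
Qed.

Lemma reach_mono t x y : reach (Fin 1) (Fin t) x y -> reach (Fin 1) Inf x y.
Proof.
elim=> [z|a b c Hm _ IH]; first exact: reach_refl.
apply: reach_step IH; case: Hm => [i w o k Hk Hki | i w o l Hl Hlw].
- exact: move_in.
- by apply: move_out => //; move: Hl; rewrite /allowed => /andP [-> _].
Qed.

Lemma ns2314 : ~ sortable (Fin 1) Inf [:: 2;3;1;4].
Proof. by apply: nonsort; vm_compute. Qed.
Lemma ns3124 : ~ sortable (Fin 1) Inf [:: 3;1;2;4].
Proof. by apply: nonsort; vm_compute. Qed.
Lemma ns3142 : ~ sortable (Fin 1) Inf [:: 3;1;4;2].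
Proof. by apply: nonsort; vm_compute. Qed.

Lemma reach_o s t x y : reach s t x y -> exists u, y.2 = u ++ x.2.
Proof.
elim=> [z|a b c Hm _ [u Hu]]; first by exists [::].
case: Hm Hu => [i w o k _ _ | i w o l _ _] /= Hu; first by exists u.
by exists (u ++ take l w); rewrite Hu catA.
Qed.

Lemma reach_inv s t x z : reach s t x z -> x = z \/ exists y, move s t x y /\ reach s t y z.
Proof. case=> [y|a b c H1 H2]; [by left | by right; exists b]. Qed.

Lemma move_inv s t i w o y : move s t (i,w,o) y ->
  (exists k, [/\ allowed s k, k <= size i & y = (drop k i, take k i ++ w, o)]) \/
  (exists l, [/\ allowed t l, l <= size w & y = (i, drop l w, take l w ++ o)]).
Proof.
move=> H; inversion H; subst; [left; exists k | right; exists l]; by split.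
Qed.

Definition G (t : nat) : state := ([::],[::], iota 1 t.+2).

Lemma lastG t i w o : reach (Fin 1) (Fin t) (i, w, o) (G t) -> o != [::] -> last 0 o = t.+2.
Proof.
move=> /reach_o [u Hu]; have {}Hu : iota 1 t.+2 = u ++ o := Hu.
case: o Hu => // y o Hu _.
have : last 0 (iota 1 t.+2) = t.+2.
  by rewrite -[t.+2]addn1 iotaD last_cat /= addnC.
by rewrite Hu last_cat.
Qed.

Lemma L3 t : reach (Fin 1) (Fin t) ([::], iota 1 t.+1, [:: t.+2]) (G t) -> False.
Proof.
case/reach_inv => [[]|[y [Hm Hr]]]; first by [].
case/move_inv: Hm => [[k [Hk Hki ->]]|[l [H4 H5 ->]]] in Hr *.
  by move: Hk Hki; rewrite /allowed => /andP [H0 _] /=; lia.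
move: H4; rewrite /allowed => /andP [H0 Hlt].
case: (reach_o Hr) => u Hu.
have {Hu} : iota 1 t.+2 = u ++ (take l (iota 1 t.+1) ++ [:: t.+2]) := Hu.
rewrite take_iota.
have -> : minn l t.+1 = l by lia.
case: u => [|y0 u].
  by move/(congr1 size); rewrite /= !size_iota size_cat size_iota /=; lia.
move=> [Ey Hu].
have : 1 \in (2 :: iota 3 t) by rewrite Hu !mem_cat mem_iota; lia.
by rewrite inE mem_iota.
Qed.

Lemma L2 t : reach (Fin 1) (Fin t) ([::], t.+2 :: iota 1 t.+1, [::]) (G t) -> False.
Proof.
case/reach_inv => [[]|[y [Hm Hr]]]; first by [].
case/move_inv: Hm => [[k [Hk Hki ->]]|[l [H4 H5 ->]]] in Hr *.
  by move: Hk Hki; rewrite /allowed => /andP [H0 _] /=; lia.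
move: H4; rewrite /allowed => /andP [H0 Hlt].
case: l Hr H0 Hlt H5 => // [[|l]] Hr _ Hlt H5.
  by apply: L3; exact: Hr.
have := lastG Hr; rewrite cats0 /= => /(_ isT).
rewrite take_iota.
have -> : minn l t = l by lia.
move=> E; have := mem_last 1 (iota 2 l); rewrite E inE mem_iota; lia.
Qed.

Lemma L1 t i w : rev w ++ i = rev (iota 1 t.+1) ->
  reach (Fin 1) (Fin t) (rcons i t.+2, w, [::]) (G t) -> False.
Proof.
elim: i w => [|x i IH] w Hw; case/reach_inv => [[]|[y [Hm Hr]]] //.
- case/move_inv: Hm => [[k [H4 Hki ->]]|[l [H4 H5 ->]]] in Hr *.
  + have Ek : k = 1 by move: H4 => /andP [H0 H1]; lia.
    subst k; move: Hr; rewrite /= ?drop0 ?take0 ?cat0s => Hr.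
    apply: L2; move: Hr; congr (reach _ _ (_, _ :: _, _) _).
    by rewrite -(revK w) -(cats0 (rev w)) Hw revK.
  + move: H4; rewrite /allowed => /andP [H0 Hlt].
    have := lastG Hr; rewrite cats0.
    case E: (take l w) => [|z s]; first by move: (size_take l w) Hlt H5; rewrite E; case: ltnP => /=; lia.
    move=> /(_ isT) /= El.
    have : last z s \in w by rewrite -(cat_take_drop l w) mem_cat E mem_last.
    rewrite -mem_rev => Hin.
    have : last z s \in rev (iota 1 t.+1) by rewrite -Hw cats0.
    by rewrite mem_rev mem_iota El; lia.
- case/move_inv: Hm => [[k [H4 Hki ->]]|[l [H4 H5 ->]]] in Hr *.
  + have Ek : k = 1 by move: H4 => /andP [H0 H1]; lia.
    subst k; move: Hr; rewrite /= ?drop0 ?take0 ?cat0s => Hr.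
    apply: (IH (x :: w)) => //.
    by rewrite rev_cons cat_rcons.
  + move: H4; rewrite /allowed => /andP [H0 Hlt].
    have := lastG Hr; rewrite cats0.
    case E: (take l w) => [|z s]; first by move: (size_take l w) Hlt H5; rewrite E; case: ltnP => /=; lia.
    move=> /(_ isT) /= El.
    have : last z s \in w by rewrite -(cat_take_drop l w) mem_cat E mem_last.
    rewrite -mem_rev => Hin.
    have : last z s \in rev (iota 1 t.+1) by rewrite -Hw mem_cat Hin.
    by rewrite mem_rev mem_iota El; lia.
Qed.

Lemma nsD t : ~ sortable (Fin 1) (Fin t) (rcons (rev (iota 1 t.+1)) t.+2).
Proof.
rewrite /sortable size_rcons size_rev size_iota => H.
by apply: (@L1 t (rev (iota 1 t.+1)) [::]).
Qed.


Lemma alg c p : cap_ok c -> is_perm p -> avoidP c p -> sortable (Fin 1) c p.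
Proof.
move=> Hc Hp Ha.
have := @alg_state c (size p) Hc (2 * size p) p [::].
rewrite /= !addn0 subnn cats0 => H.
apply: H => //; first exact: bs_nil.
Qed.

Lemma involved_size s p : involved s p -> size s <= size p.
Proof. by case=> q [Hq <- _]; apply: size_subseq. Qed.

Lemma count_lt_iota x n : 0 < x <= n -> count (fun y => y < x) (iota 1 n) = x.-1.
Proof.
move=> Hx.
have -> : iota 1 n = iota 1 x.-1 ++ iota (1 + x.-1) (n - x.-1).
  by rewrite -iotaD; congr iota; lia.
rewrite count_cat.
rewrite (@eq_in_count _ _ predT (iota 1 x.-1)); last first.
  by move=> y; rewrite mem_iota /= => H; apply/idP; lia.
rewrite (@eq_in_count _ _ pred0 (iota (1 + x.-1) (n - x.-1))); last first.
  by move=> y; rewrite mem_iota /= => H; apply/negbTE; rewrite -leqNgt; lia.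
by rewrite count_predT count_pred0 size_iota addn0.
Qed.

Lemma perm_rank s i : is_perm s -> i < size s ->
  count (fun j => nth 0 s j < nth 0 s i) (iota 0 (size s)) = (nth 0 s i).-1.
Proof.
move=> Hs Hi.
have -> : count (fun j => nth 0 s j < nth 0 s i) (iota 0 (size s))
        = count (fun y => y < nth 0 s i) (mkseq (nth 0 s) (size s)).
  by rewrite /mkseq count_map.
rewrite mkseq_nth (permP Hs); apply: count_lt_iota.
have : nth 0 s i \in iota 1 (size s) by rewrite -(perm_mem Hs) mem_nth.
by rewrite mem_iota; lia.
Qed.

Lemma perm_iso_eq s p : is_perm s -> is_perm p -> size s = size p ->
  (forall i j, i < size s -> j < size s ->
     (nth 0 p i < nth 0 p j) = (nth 0 s i < nth 0 s j)) -> s = p.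
Proof.
move=> Hs Hp Hsz Hiso; apply: (eq_from_nth (x0 := 0)) => // i Hi.
have E1 := perm_rank Hs Hi.
have Hi' : i < size p by rewrite -Hsz.
have E2 := perm_rank Hp Hi'.
have : count (fun j => nth 0 p j < nth 0 p i) (iota 0 (size p))
     = count (fun j => nth 0 s j < nth 0 s i) (iota 0 (size s)).
  rewrite Hsz; apply: eq_in_count => j; rewrite mem_iota => Hj.
  by apply: Hiso; rewrite ?Hsz //; lia.
rewrite E1 E2.
have : nth 0 s i \in iota 1 (size s) by rewrite -(perm_mem Hs) mem_nth.
have : nth 0 p i \in iota 1 (size p) by rewrite -(perm_mem Hp) mem_nth.
rewrite !mem_iota; lia.
Qed.

Lemma involved_eq s p : is_perm s -> is_perm p -> involved s p -> size s = size p -> s = p.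
Proof.
move=> Hs Hp [q [Hq Hqs Hiso]] Hsz.
have Eq : q = p.
  by apply/eqP; rewrite -(size_subseq_leqif Hq).2 Hqs Hsz.
subst q; apply: perm_iso_eq => // i j Hi Hj; rewrite Hiso //.
Qed.

Lemma involved_trans a b c : uniq b -> involved a b -> involved b c -> involved a c.
Proof.
move=> Hb [r [Hr Hra Hiso1]] [q [Hq Hqb Hiso2]].
pose f x := nth 0 q (index x b).
have Efb : map f b = q.
  apply: (eq_from_nth (x0 := 0)); first by rewrite size_map.
  move=> i; rewrite size_map => Hi.
  by rewrite (nth_map 0) // /f index_uniq.
exists (map f r); split.
- apply: subseq_trans Hq; rewrite -Efb; exact: map_subseq.
- by rewrite size_map.
- move=> i j Hi Hj.
  rewrite -Hra in Hi Hj.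
  rewrite !(nth_map 0) // /f.
  have Hri : nth 0 r i \in b by apply: (mem_subseq Hr); apply: mem_nth.
  have Hrj : nth 0 r j \in b by apply: (mem_subseq Hr); apply: mem_nth.
  rewrite Hiso2 ?index_mem // !nth_index // Hiso1 // -Hra //.
Qed.

Lemma subseq_rcons_inv (s u : seq nat) x y : subseq (rcons s x) (rcons u y) -> subseq s u.
Proof.
rewrite -subseq_rev !rev_rcons /=.
case: eqP => _; first by rewrite subseq_rev.
move=> H; rewrite -subseq_rev; apply: subseq_trans H; exact: subseq_cons.
Qed.

Lemma Dpat_sorted t q0 q1 q2 q3 : subseq [:: q0; q1; q2; q3] (Dpat t) -> q1 < q0 /\ q2 < q1.
Proof.
rewrite /Dpat -[[:: q0; q1; q2; q3]]/(rcons [:: q0; q1; q2] q3) => /subseq_rcons_inv H.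
have : sorted (fun x y => y < x) [:: q0; q1; q2].
  apply: subseq_sorted H _.
    by move=> x y z h1 h2; apply: ltn_trans h2 h1.
  by rewrite rev_sorted; apply: iota_ltn_sorted.
by rewrite /= => /and3P [-> -> _].
Qed.

Lemma Dpat_avoid t s : s \in [:: [:: 2; 3; 1; 4]; [:: 3; 1; 2; 4]; [:: 3; 1; 4; 2]] ->
  ~ involved s (Dpat t).
Proof.
move=> Hs [q [Hq Hsz Hiso]].
have H4 : size s = 4 by move: Hs; rewrite !inE => /or3P [] /eqP ->.
rewrite H4 in Hsz Hiso.
case: q Hq Hsz Hiso => [|q0 [|q1 [|q2 [|q3 [|]]]]] // Hq _ Hiso.
have [h1 h2] := Dpat_sorted Hq.
move: Hs; rewrite !inE => /or3P [] /eqP Es; subst s.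
- by move: (Hiso 0 1 isT isT) => /=; rewrite ltnNge (ltnW h1).
- by move: (Hiso 1 2 isT isT) => /=; rewrite ltnNge (ltnW h2).
- have := Hiso 1 2 isT isT; rewrite /= ltnNge (ltnW h2) //.
Qed.

Lemma Dpat_perm t : is_perm (Dpat t).
Proof.
rewrite /is_perm /Dpat size_rcons size_rev size_iota.
have -> : iota 1 t.+2 = iota 1 t.+1 ++ [:: t.+2].
  by rewrite -[X in iota 1 X]addn1 iotaD add1n.
by rewrite -cats1 perm_cat2r perm_rev.
Qed.

Lemma Dpat_size t : size (Dpat t) = t.+2.
Proof. by rewrite /Dpat size_rcons size_rev size_iota. Qed.

From Stdlib Require Import Classical.

Lemma inv_lt s q : is_perm s -> is_perm q -> involved s q -> s <> q -> size s < size q.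
Proof.
move=> Hs Hq Hi Hne; have := involved_size Hi; rewrite leq_eqVlt => /orP [/eqP E|//].
by exfalso; apply: Hne; apply: involved_eq.
Qed.

Lemma inU_char c (L : seq (seq nat)) p :
  (forall q, q \in L -> is_perm q /\ ~ sortable (Fin 1) c q) ->
  (forall q, is_perm q -> (forall r, r \in L -> ~ involved r q) -> sortable (Fin 1) c q) ->
  (forall q s, q \in L -> is_perm s -> involved s q -> s <> q ->
     forall r, r \in L -> ~ involved r s) ->
  inU (Fin 1) c p <-> p \in L.
Proof.
move=> H1 H2 H3; split.
- case=> Hp Hns Hmin.
  case: (classic (exists2 r, r \in L & involved r p)) => [[r Hr Hinv]|Hno].
  + case: (H1 _ Hr) => Hpr Hnsr.
    case: (eqVneq r p) => [<- //|/eqP Hne].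
    by exfalso; apply: Hnsr; apply: Hmin.
  + by exfalso; apply: Hns; apply: H2 => // r Hr Hi; apply: Hno; exists r.
- move=> Hq; case: (H1 _ Hq) => Hp Hns; split => // s Hs Hinv Hne.
  by apply: H2 => // r Hr; apply: (H3 _ _ Hq Hs Hinv Hne).
Qed.

Lemma perm_uniq' s : is_perm s -> uniq s.
Proof. by move=> H; rewrite (perm_uniq H) iota_uniq. Qed.

Theorem mainTheorem4 :
  (forall p : seq nat,
     inU (Fin 1) Inf p <->
     p \in [:: [:: 2; 3; 1; 4]; [:: 3; 1; 2; 4]; [:: 3; 1; 4; 2]]) /\
  (forall t : nat, 2 <= t -> forall p : seq nat,
     inU (Fin 1) (Fin t) p <->
     p \in [:: [:: 2; 3; 1; 4]; [:: 3; 1; 2; 4]; [:: 3; 1; 4; 2];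
               rcons (rev (iota 1 t.+1)) t.+2]).
Proof.
split.
- move=> p; apply: inU_char.
  + move=> q; rewrite !inE => /or3P [] /eqP ->; split => //.
    * exact: ns2314.
    * exact: ns3124.
    * exact: ns3142.
  + move=> q Hq Hav; apply: alg => //; split.
    * by apply: Hav; rewrite !inE eqxx.
    * by apply: Hav; rewrite !inE eqxx orbT.
    * by apply: Hav; rewrite !inE eqxx !orbT.
    * by [].
  + move=> q s Hq Hs Hi Hne r Hr Hri.
    have Hq4 : size q = 4 by move: Hq; rewrite !inE => /or3P [] /eqP ->.
    have Hqp : is_perm q by move: Hq; rewrite !inE => /or3P [] /eqP ->.
    have := inv_lt Hs Hqp Hi Hne; have := involved_size Hri.
    have Hr4 : size r = 4 by move: Hr; rewrite !inE => /or3P [] /eqP ->.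
    by rewrite Hq4 Hr4 => h1 h2; move: (leq_ltn_trans h1 h2).
- move=> t Ht p; apply: inU_char.
  + move=> q; rewrite !inE => /or4P [] /eqP ->; split => //.
    * by move/reach_mono; exact: ns2314.
    * by move/reach_mono; exact: ns3124.
    * by move/reach_mono; exact: ns3142.
    * exact: Dpat_perm.
    * exact: nsD.
  + move=> q Hq Hav; apply: alg => //; [by rewrite /= ltnW|split].
    * by apply: Hav; rewrite !inE eqxx.
    * by apply: Hav; rewrite !inE eqxx orbT.
    * by apply: Hav; rewrite !inE eqxx !orbT.
    * by move=> t' [<-]; apply: Hav; rewrite !inE eqxx !orbT.
  + move=> q s Hq Hs Hi Hne r Hr Hri.
    move: Hq; rewrite !inE => /or4P [/eqP Eq|/eqP Eq|/eqP Eq|/eqP Eq]; subst q.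
    1-3: ((have h2 : size s < 4 by apply: (inv_lt Hs _ Hi Hne)); have h1 := involved_size Hri;
          move: Hr; rewrite !inE => /or4P [] /eqP Er; subst r;
          move: h1 h2; rewrite ?size_rcons ?size_rev ?size_iota /=; lia).
    have Hlt := inv_lt Hs (Dpat_perm t) Hi Hne.
    have Htr := involved_trans (perm_uniq' Hs) Hri Hi.
    move: Hr; rewrite !inE => /or4P [/eqP Er|/eqP Er|/eqP Er|/eqP Er]; subst r.
    1-3: by apply: (Dpat_avoid (t := t) _ Htr); rewrite !inE eqxx ?orbT.
    have := involved_size Hri; move: Hlt.
    rewrite /Dpat size_rcons size_rev size_iota; lia.
Qed.
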